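(* Let $p\ge3$ be an odd integer, let $k\ge1$, let $U$ be the uniform distribution on the subset $\{0,1\}\subset\mathbb{F}_p$, and let $D$ be a probability distribution on $\mathbb{F}_p^k$ such that $|D(x)-p^{-k}|\le p^{-2k}$ for each $x\in\mathbb{F}_p^k$. Then there exists a probability distribution $E$ on $\mathbb{F}_p^k$ such that $D=U^k+E$.
   Context: $U^k$ is the product distribution on $\mathbb{F}_p^k$ with independent coordinates distributed according to $U$. For distributions $D',D''$ on $\mathbb{F}_p^k$, $D'+D''$ is their convolution: $(D'+D'')(x)=\sum_{y+z=x}D'(y)D''(z)$. Here $\mathbb{F}_p$ denotes $\mathbb{Z}/p\mathbb{Z}$. *)

(* Defs.v *)
From HB Require Import structures.
From mathcomp Require Import all_boot all_order all_algebra.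
From mathcomp Require Import reals.
Set Implicit Arguments. Unset Strict Implicit. Unset Printing Implicit Defensive.
Import Order.TTheory GRing.Theory Num.Theory.
Local Open Scope ring_scope.

(* F_p^k, with F_p = Z/pZ represented by 'Z_p (faithful for p >= 2) and
   vectors as row vectors 'rV['Z_p]_k. *)
Notation vecp p k := ('rV['Z_p]_k).

Definition is_distr (R : realType) (T : finType) (D : T -> R) : Prop :=
  (forall x, 0 <= D x) /\ \sum_(x : T) D x = 1.

Definition unif01 (R : realType) (p : nat) (a : 'Z_p) : R :=
  if (a == 0) || (a == 1) then 2^-1 else 0.

Definition unif01_pow (R : realType) (p k : nat) (x : vecp p k) : R :=
  \prod_(i < k) unif01 R (x ord0 i).

(* Convolution (D' + D'')(x) = sum_{y + z = x} D'(y) D''(z). *)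
Definition conv (R : realType) (p k : nat) (D1 D2 : vecp p k -> R)
    (x : vecp p k) : R :=
  \sum_(y : vecp p k) \sum_(z : vecp p k | y + z == x) D1 y * D2 z.

(* Main.v *)
Require Import Defs.
From HB Require Import structures.
From mathcomp Require Import all_boot all_order all_algebra.
From mathcomp Require Import reals.
From mathcomp Require Import ring lra.
Import Order.TTheory GRing.Theory Num.Theory.
Local Open Scope ring_scope.

Section Aux.
Variables (R : realType) (q k : nat).

Definition sgn (a : 'Z_(q.+2)) : R := (-1) ^+ (nat_of_ord a).
Definition wt (j : 'rV['Z_(q.+2)]_k) : R := \prod_i sgn (j ord0 i).

Lemma sum_rV_prod (T : finType) (F : 'I_k -> T -> R) :
  \sum_(x : 'rV[T]_k) \prod_i F i (x ord0 i) = \prod_i \sum_a F i a.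
Proof.
rewrite bigA_distr_bigA.
rewrite (reindex (fun f : {ffun 'I_k -> T} => \row_i f i)) /=.
  by apply: eq_bigr => f _; apply: eq_bigr => i _; rewrite mxE.
exists (fun x : 'rV[T]_k => [ffun i => x ord0 i]) => [f _|x _].
  by apply/ffunP => i; rewrite ffunE mxE.
by apply/rowP => i; rewrite mxE ffunE.
Qed.

Lemma sum_alt n : \sum_(a < n) ((-1) ^+ a : R) = (odd n)%:R.
Proof.
elim: n => [|n IH]; first by rewrite big_ord0.
rewrite big_ord_recr /= IH -signr_odd.
by case: (odd n) => /=; rewrite ?expr1 ?expr0 ?addrN ?add0r.
Qed.

Lemma sum_sgn (hodd : odd q.+2) : \sum_(a : 'Z_(q.+2)) sgn a = 1.
Proof.
change (\sum_(a < q.+2) ((-1) ^+ a : R) = 1).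
by rewrite sum_alt hodd.
Qed.

Lemma sum_wt (hodd : odd q.+2) : \sum_j wt j = 1.
Proof.
rewrite /wt (@sum_rV_prod _ (fun _ a => sgn a)); apply: big1 => i _; exact: sum_sgn.
Qed.

Lemma norm_wt j : `|wt j| = 1.
Proof. rewrite /wt normr_prod; apply: big1 => i _; exact: normr_sign. Qed.

Lemma val_m1 (b : 'Z_(q.+2)) :
  nat_of_ord (b - 1) = ((b + ((q.+2 - 1 %% q.+2) %% q.+2)) %% q.+2)%N.
Proof. by []. Qed.

Lemma conv1 (hodd : odd q.+2) (b : 'Z_(q.+2)) :
  \sum_a unif01 R a * sgn (b - a) = (b == 0)%:R.
Proof.
rewrite (bigD1 0) //= (bigD1 1) /=; last first.
  by [].

rewrite big1 ?addr0; last first.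
  move=> a /andP [a0 a1].
  by rewrite /unif01 (negbTE a0) (negbTE a1) mul0r.
rewrite /unif01 !eqxx ?orbT /= subr0 /sgn.

have m1 : (1 %% q.+2 = 1)%N by rewrite modn_small.
case: (eqVneq b 0) => [->|bn0].
  have -> : nat_of_ord (0 - 1 : 'Z_(q.+2)) = q.+1.
    by rewrite val_m1 m1 /= add0n subn1 !modn_small.
  have : odd q.+1 = false by move: hodd => /=; rewrite negbK => ->.
  rewrite -[(-1) ^+ q.+1]signr_odd => ->; rewrite /= expr0 mulr1.
  by lra.
have [c hc] : exists c, nat_of_ord b = c.+1.
  case hb: (nat_of_ord b) => [|c]; last by exists c.
  by move: bn0; have -> : b = 0 by apply/val_inj.
have -> : nat_of_ord (b - 1) = c.
  rewrite val_m1 m1 hc subn1 (modn_small (ltnSn q.+1)) /=.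
  rewrite addSnnS modnDr modn_small //.
  by have := ltn_ord b; rewrite hc => /ltnW.
by rewrite hc exprS mulN1r mulrN addNr.
Qed.


Lemma prod_eq0 (j : 'rV['Z_(q.+2)]_k) :
  \prod_i ((j ord0 i == 0)%:R : R) = (j == 0)%:R.
Proof.
case: (eqVneq j 0) => [->|jn0].
  by apply: big1 => i _; rewrite mxE eqxx.
case: (pickP (fun i => j ord0 i != 0)) => [i hi|h].
  by rewrite (bigD1 i) //= (negbTE hi) mul0r.
move: jn0; have -> // : j = 0.
apply/rowP => i; rewrite mxE; move: (h i) => /negbFE/eqP.
by have -> : (0 : 'I_1) = ord0 by apply/val_inj.
by rewrite eqxx.
Qed.

Lemma cwt (hodd : odd q.+2) (j : 'rV['Z_(q.+2)]_k) :
  \sum_y unif01_pow R (p:=q.+2) (k:=k) y * wt (j - y) = (j == 0)%:R.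
Proof.
rewrite -prod_eq0.
rewrite -[RHS](eq_bigr _ (fun i _ => conv1 hodd (j ord0 i))).
rewrite -(@sum_rV_prod _ (fun i a => unif01 R a * sgn (j ord0 i - a))).
apply: eq_bigr => y _; rewrite /unif01_pow /wt -big_split /=.
by apply: eq_bigr => i _; rewrite !mxE.
Qed.

Lemma shift_sum (F : 'rV['Z_(q.+2)]_k -> R) (j : 'rV['Z_(q.+2)]_k) :
  \sum_x F (x - j) = \sum_x F x.
Proof. by rewrite [RHS](reindex_inj (addIr (-j))). Qed.

End Aux.

Lemma main (R : realType) (q k : nat) (hodd : odd q.+2)
    (D : 'rV['Z_(q.+2)]_k -> R) :
  is_distr D ->
  (forall x : 'rV['Z_(q.+2)]_k, `|D x - ((q.+2)%:R ^- k)| <= (q.+2)%:R ^- (2 * k)) ->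
  exists E : 'rV['Z_(q.+2)]_k -> R,
    is_distr E /\ (forall x, D x = conv (unif01_pow R (k:=k) (p:=q.+2)) E x).
Proof.
move=> [D0 D1] hb.
set c : R := (q.+2)%:R ^- k.
exists (fun x => \sum_j wt R q k j * D (x - j)); split; first split.
- move=> x.
  have -> : \sum_j wt R q k j * D (x - j) =
     c * \sum_j wt R q k j + \sum_j wt R q k j * (D (x - j) - c).
    rewrite mulr_sumr -big_split /=; apply: eq_bigr => j _; ring.
  rewrite (sum_wt R q k hodd) mulr1.
  set r := \sum_j _.
  have : `|r| <= c.
    apply: le_trans (ler_norm_sum _ _ _) _.
    apply: le_trans (_ : \sum_(j : 'rV['Z_(q.+2)]_k) (q.+2)%:R ^- (2 * k) <= _).
      apply: ler_sum => j _; rewrite normrM (norm_wt R q k) mul1r; exact: hb.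
    rewrite sumr_const card_mx mul1n card_ord.
    change ((Zp_trunc q.+2).+2) with q.+2.
    have -> : forall y : R, y *+ (q.+2 ^ k) = (q.+2)%:R ^+ k * y.
      by move=> y; rewrite -natrX mulr_natl.
    rewrite mul2n -addnn exprD invfM mulrA divff ?mul1r //.
    by rewrite expf_neq0 // pnatr_eq0.
  rewrite ler_norml => /andP [h1 h2]; lra.
- rewrite exchange_big /=.
  under eq_bigr => j _ do rewrite -mulr_sumr (shift_sum R q k (fun x => D x)) D1 mulr1.
  exact: (sum_wt R q k hodd).
move=> x; rewrite /conv.
rewrite (eq_bigr (fun y => unif01_pow R (k:=k) (p:=q.+2) y *
   \sum_j wt R q k j * D (x - y - j))); last first.
  move=> y _; rewrite (big_pred1 (x - y)) // => z /=.
  apply/eqP/eqP => [<-|->]; first by rewrite addrC addKr.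
  by rewrite addrC subrK.
rewrite (eq_bigr (fun y => \sum_j unif01_pow R (k:=k) (p:=q.+2) y *
   (wt R q k (j - y) * D (x - j)))); last first.
  move=> y _; rewrite mulr_sumr [LHS](reindex_inj (addIr (-y))) /=.
  by apply: eq_bigr => j _; rewrite opprB addrA subrK.
rewrite exchange_big /=.
rewrite (eq_bigr (fun j => (j == 0)%:R * D (x - j))); last first.
  move=> j _; rewrite -(cwt R q k hodd j) mulr_suml.
  by apply: eq_bigr => y _; rewrite mulrA.
rewrite (bigD1 0) //= eqxx mul1r subr0 big1 ?addr0 // => j /negbTE ->.
by rewrite mul0r.
Qed.

Theorem lemma4p1 (R : realType) (p k : nat) (hp3 : (3 <= p)%N)
    (hpodd : odd p) (hk : (1 <= k)%N) (D : 'rV['Z_p]_k -> R) :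
  is_distr D ->
  (forall x : 'rV['Z_p]_k, `|D x - (p%:R ^- k)| <= p%:R ^- (2 * k)) ->
  exists E : 'rV['Z_p]_k -> R,
    is_distr E /\ (forall x, D x = conv (unif01_pow R (k:=k) (p:=p)) E x).
Proof.
case: p hp3 hpodd D => [|[|q]] // _ hodd D.
exact: main.
Qed.
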